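(* Let $\mathcal C$ be a linear $[n,k]$ MDS code over $F$, and let $L\in\mathbb Z^+$ satisfy $$L<\max\left\{\binom{n-1}{k-1}\Big/\binom{\lceil (n+k)/2\rceil-2}{k-1},\;k\right\}+1,$$ where the ratio is interpreted as $+\infty$ if its denominator is $0$. If $\mathcal C$ is $L$-MDS, then $\mathcal C$ is $\ell$-MDS for every $\ell\in\{1,\dots,L\}$.
   Context: $F=\mathrm{GF}(q)$; $\mathsf w(\cdot)$ is Hamming weight. For $L\in\mathbb Z^+$ and nonnegative $\tau\in\frac{1}{L+1}\mathbb Z$, a code $\mathcal C\subseteq F^n$ is strongly-$(\tau,L)$-list decodable if there do not exist $y\in F^n$ and $L+1$ distinct codewords $c_0,\dots,c_L\in\mathcal C$ with $\sum_{m=0}^{L}\mathsf w(y-c_m)\le(L+1)\tau$. A linear $[n,k]$ code over $F$ is called $L$-MDS if it is strongly-$\left(\frac{L(n-k)}{L+1},L\right)$-list decodable; equivalently, any $L+1$ distinct vectors lying in a common coset of the code have total Hamming weight greater than $L(n-k)$. (1-MDS coincides with MDS.) *)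

(* Defs.v *)
From HB Require Import structures.
From mathcomp Require Import all_boot all_order all_algebra all_field.
Set Implicit Arguments. Unset Strict Implicit. Unset Printing Implicit Defensive.
Import Order.TTheory GRing.Theory Num.Theory.
Local Open Scope ring_scope.

Definition hw (F : finFieldType) (n : nat) (x : 'rV[F]_n) : nat :=
  #|[set i : 'I_n | x 0 i != 0]|.

Definition linear_code (F : finFieldType) (n k : nat) (C : {vspace 'rV[F]_n}) : Prop :=
  \dim C = k.

(* MDS: minimum distance n - k + 1, i.e. every nonzero codeword has weight >= n-k+1. *)
Definition MDS (F : finFieldType) (n k : nat) (C : {vspace 'rV[F]_n}) : Prop :=
  forall c, c \in C -> c != 0 -> (n - k + 1 <= hw c)%N.

Definition strongly_list_decodable (F : finFieldType) (n : nat)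
  (C : {vspace 'rV[F]_n}) (tau : rat) (L : nat) : Prop :=
  ~ exists (y : 'rV[F]_n) (c : 'I_L.+1 -> 'rV[F]_n),
      [/\ injective c, (forall m, c m \in C) &
          ((\sum_(m < L.+1) hw (y - c m))%N%:R <= L.+1%:R * tau :> rat)].

Definition L_MDS (F : finFieldType) (n k : nat) (C : {vspace 'rV[F]_n}) (L : nat) : Prop :=
  strongly_list_decodable C ((L * (n - k))%N%:R / L.+1%:R) L.

(* Main.v *)
Require Import Defs.
From HB Require Import structures.
From mathcomp Require Import all_boot all_order all_algebra all_field.
From mathcomp Require Import zify.
Set Implicit Arguments. Unset Strict Implicit. Unset Printing Implicit Defensive.
Import Order.TTheory GRing.Theory Num.Theory.
Local Open Scope ring_scope.

Section Helpers.
Variables (F : finFieldType) (n k : nat) (C : {vspace 'rV[F]_n}).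
Hypothesis dimC : \dim C = k.
Hypothesis mds : MDS k C.

Definition agr (y c : 'rV[F]_n) : {set 'I_n} := [set i | c 0 i == y 0 i].

Lemma hw_agr y c : hw (y - c) = (n - #|agr y c|)%N.
Proof.
rewrite /hw.
have -> : [set i | (y - c) 0 i != 0] = ~: agr y c.
  by apply/setP => i; rewrite !inE !mxE subr_eq0 eq_sym.
have := cardsC (agr y c); rewrite card_ord. move: #|agr y c| #|~: agr y c| => a b; lia.
Qed.

Lemma agr_inter y c c' : c \in C -> c' \in C -> c != c' ->
  (#|agr y c :&: agr y c'| < k)%N.
Proof.
move=> cC c'C ne.
have := mds (rpredB cC c'C); rewrite subr_eq0 => /(_ ne) H.
have : (hw (c - c') <= n - #|agr y c :&: agr y c'|)%N.
  have := cardsC (agr y c :&: agr y c'); rewrite card_ord => E.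
  suff : (hw (c - c') <= #|~: (agr y c :&: agr y c')|)%N by lia.
  apply: subset_leq_card; apply/subsetP => i; rewrite !inE !mxE subr_eq0.
  by apply: contra => /andP[/eqP -> /eqP ->].
move: H; have := subset_leq_card (subsetT (agr y c :&: agr y c')).
rewrite cardsT card_ord; move: (hw (c - c')) (#|agr y c :&: agr y c'|) => a b; lia.
Qed.

Lemma agr_exists y (K : {set 'I_n}) : #|K| = k ->
  exists2 c, c \in C & K \subset agr y c.
Proof.
move=> cK.
pose r (c : 'rV[F]_n) : {ffun 'I_n -> F} := [ffun i => if i \in K then c 0 i else 0].
pose CS := [set c : 'rV[F]_n | c \in C].
have rinj : {in CS &, injective r}.
  move=> c c'; rewrite !inE => cC c'C rE; apply/eqP; apply/negPn/negP => ne.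
  have := agr_inter c' cC c'C ne.
  rewrite -cK ltnNge => /negP; apply.
  apply: subset_leq_card; apply/subsetP => i iK; rewrite !inE eqxx andbT.
  by have := congr1 (fun f : {ffun 'I_n -> F} => f i) rE; rewrite /= !ffunE iK => ->.
have rP c : r c \in pffun_on 0 K (predT : pred F).
  apply/pffun_onP; split => //; apply/subsetP => i; rewrite !inE ffunE.
  by case: (i \in K) => //; rewrite eqxx.
have sub : r @: CS \subset pffun_on 0 K (predT : pred F).
  by apply/subsetP => _ /imsetP[c _ ->].
have cardE : #|r @: CS| = #|pffun_on 0 K (predT : pred F)|.
  rewrite card_pffun_on card_in_imset // cardsE card_vspace dimC cK.
  by rewrite cardT /=; congr (_ ^ _)%N; rewrite -cardT.
have Heq := elimT (subset_cardP cardE) sub.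
have /imsetP[c cCS rcE] : r y \in r @: CS by rewrite Heq rP.
exists c; first by move: cCS; rewrite inE.
apply/subsetP => i iK; rewrite inE.
by have := congr1 (fun f : {ffun 'I_n -> F} => f i) rcE; rewrite /= !ffunE iK => ->.
Qed.

Lemma arith1 (a b d e f kk : nat) : (a < kk - 1)%N ->
  (b + a)%N = (d + e)%N -> (f < kk)%N ->
  (0 < kk)%N -> d = (kk - 1)%N -> e = (kk - 1)%N -> (b <= f)%N -> False.
Proof. lia. Qed.

Lemma ball_count y : (0 < k)%N -> (k <= n)%N -> y \notin C ->
  exists N', [/\ (N' < #|[set c : 'rV[F]_n | (c \in C) && (k <= #|agr y c|)%N]|)%N,
     (k <= N')%N & ('C(n - 1, k - 1) <= N' * 'C((n + k).+1 %/ 2 - 2, k - 1))%N].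
Proof.
move=> k0 kn yC.
set B := [set c : 'rV[F]_n | _].
have [K cK] : exists K : {set 'I_n}, #|K| = k.
  have : (0 < #|[set A : {set 'I_n} | #|A| == k]|)%N by rewrite card_draws card_ord bin_gt0.
  by case/card_gt0P => K; rewrite inE => /eqP; exists K.
have [c1 c1C Kc1] := agr_exists y cK.
case: (@arg_maxnP _ c1 (fun c => c \in C) (fun c => #|agr y c|) c1C) => c0 c0C c0max.
have c0k : (k <= #|agr y c0|)%N.
  apply: leq_trans (c0max _ c1C); rewrite -cK; exact: subset_leq_card.
have [j jc0] : exists j, j \notin agr y c0.
  case: (pickP (fun j => j \notin agr y c0)) => [j jP|none]; first by exists j.
  move: yC; suff -> : y = c0 by rewrite c0C.
  apply/rowP => b.
  by have := none b; rewrite /= inE; case: eqP.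
pose phi (T : {set 'I_n}) := odflt 0 [pick c | (c \in C) && (j |: T \subset agr y c)].
have phiP (T : {set 'I_n}) : j \notin T -> #|T| = (k - 1)%N ->
    phi T \in C /\ j |: T \subset agr y (phi T).
  move=> jT cT; have cjT : #|j |: T| = k by rewrite cardsU1 jT cT; lia.
  have [c cC Hc] := agr_exists y cjT.
  rewrite /phi; case: pickP => [c' /andP[] //|/(_ c)]; by rewrite cC Hc.
pose Tset := [set T : {set 'I_n} | (T \subset [set~ j]) && (#|T| == (k - 1)%N)].
have TsetP T : T \in Tset -> j \notin T /\ #|T| = (k - 1)%N.
  rewrite inE => /andP[/subsetP sT /eqP ->]; split => //.
  by apply/negP => /sT; rewrite !inE eqxx.
pose Im := phi @: Tset.
have ImP c : c \in Im -> [/\ c \in C, j \in agr y c, c != c0 & (k <= #|agr y c|)%N].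
  case/imsetP => T /TsetP [jT cT] ->; have [pC pA] := phiP T jT cT.
  have jA : j \in agr y (phi T) by apply: (subsetP pA); rewrite !inE eqxx.
  split => //; first by apply: contraNneq jc0 => <-.
  apply: leq_trans (subset_leq_card pA); rewrite cardsU1 jT cT; lia.
exists #|Im|; split.
- have c0B : c0 \in B by rewrite inE c0C c0k.
  rewrite (cardsD1 c0 B) c0B add1n ltnS; apply: subset_leq_card.
  apply/subsetP => c /ImP [cC _ cc0 ck]; by rewrite !inE cc0 cC ck.
- have : (0 < #|[set A : {set 'I_n} | A \subset agr y c0 & #|A| == k]|)%N.
    by rewrite cards_draws bin_gt0.
  case/card_gt0P => K2; rewrite inE => /andP[K2s /eqP cK2].
  pose TK := [set T : {set 'I_n} | T \subset K2 & #|T| == (k - 1)%N].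
  have cTK : #|TK| = k by rewrite cards_draws cK2 bin_sub // bin1.
  have TKT : TK \subset Tset.
    apply/subsetP => T; rewrite !inE => /andP[sT ->]; rewrite andbT.
    apply/subsetP => x xT; rewrite !inE; apply: contraNneq jc0 => <-.
    exact: (subsetP K2s) (subsetP sT x xT).
  have inj : {in TK &, injective phi}.
    move=> T T' TT TT' H; apply/eqP; apply/negPn/negP => neq.
    have [jT cT] := TsetP T (subsetP TKT T TT).
    have [jT' cT'] := TsetP T' (subsetP TKT T' TT').
    have [_ pA] := phiP T jT cT; have [_ pA'] := phiP T' jT' cT'.
    have cIm : phi T \in Im by apply/imsetP; exists T => //; exact: (subsetP TKT).
    have [cC _ cc0 _] := ImP _ cIm.
    have h3 := agr_inter y cC c0C cc0.
    have hI : (#|T :&: T'| < k - 1)%N.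
      rewrite ltnNge; apply/negP => hc.
      have /eqP e1 : T :&: T' == T by rewrite eqEcard subsetIl cT hc.
      have sTT' : T \subset T' by apply/setIidPl.
      by move: neq; rewrite eqEcard sTT' cT' cT leqnn.
    have hU := cardsUI T T'.
    have sU : T :|: T' \subset agr y (phi T) :&: agr y c0.
      move: TT TT'; rewrite !inE => /andP[sT _] /andP[sT' _].
      apply/subsetP => x; rewrite in_setU => /orP[] xT; rewrite in_setI; apply/andP; split.
      + by apply: (subsetP pA); rewrite in_setU1 xT orbT.
      + by apply: (subsetP K2s); apply: (subsetP sT).
      + by rewrite H; apply: (subsetP pA'); rewrite in_setU1 xT orbT.
      + by apply: (subsetP K2s); apply: (subsetP sT').
    have := subset_leq_card sU; move: hI hU h3 k0 cT cT'.
    move: #|T :&: T'| #|T :|: T'| #|T| #|T'| #|agr y (phi T) :&: agr y c0| => a b d e f.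
    exact: arith1.
  rewrite -cTK -(card_in_imset inj); apply: subset_leq_card; exact: imsetS.
- have -> : 'C(n - 1, k - 1) = #|Tset| by rewrite cards_draws cardsC1 card_ord subn1.
  rewrite -sum1_card (partition_big_imset phi) /= -sum_nat_const.
  apply: leq_sum => c cIm; rewrite sum1dep_card.
  have [cC jA cc0 ck] := ImP c cIm.
  apply: (@leq_trans #|[set T : {set 'I_n} | T \subset agr y c :\ j & #|T| == (k - 1)%N]|).
    apply: subset_leq_card; apply/subsetP => T; rewrite inE => /andP[TT /eqP phiTc].
    have TT2 : T \in Tset by move: TT; rewrite ?inE.
    have [jT cT] := TsetP T TT2; have [_ pA] := phiP T jT cT.
    rewrite inE cT eqxx andbT; apply/subsetP => x xT; rewrite in_setD1.
    have -> : x != j by apply: contraNneq jT => <-.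
    by rewrite -phiTc; apply: (subsetP pA); rewrite in_setU1 xT orbT.
  rewrite cards_draws leq_bin2l //.
  have h1 := cardsD1 j (agr y c); rewrite jA in h1.
  have h2 := c0max c cC.
  have h3 := agr_inter y cC c0C cc0.
  have h4 := cardsUI (agr y c) (agr y c0).
  have h5 := subset_leq_card (subsetT (agr y c :|: agr y c0)); rewrite cardsT card_ord in h5.
  move: h1 h2 h3 h4 h5 ck.
  move: #|agr y c| #|agr y c :\ j| #|agr y c0| #|agr y c :&: agr y c0| #|agr y c :|: agr y c0|.
  move=> a1 a2 a3 a4 a5 /=; lia.
Qed.
End Helpers.

Theorem mainTheorem9 (F : finFieldType) (n k : nat) (C : {vspace 'rV[F]_n}) (L : nat) :
  linear_code k C -> MDS k C -> (0 < L)%N ->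
  (('C((n + k).+1 %/ 2 - 2, k - 1) == 0)%N ||
   (L%:R < Num.max ('C(n - 1, k - 1)%:R / 'C((n + k).+1 %/ 2 - 2, k - 1)%:R) k%:R + 1
     :> rat)) ->
  L_MDS k C L ->
  forall l : nat, (1 <= l <= L)%N -> L_MDS k C l.
Proof.
move=> dimC mds L0 hyp LM l /andP[l1 lL] [y [c [cinj cC csum]]].
have csumN : (\sum_(m < l.+1) hw (y - c m) <= l * (n - k))%N.
  by move: csum; rewrite mulrC divfK ?pnatr_eq0 // ler_nat.
apply: LM.
have kn : (k <= n)%N.
  rewrite -dimC; have := dimvS (subvf C); by rewrite dimvf dim_matrix mul1r.
case: (posnP k) => [k0 | kpos].
  exfalso. have C0 : C = 0%VS by apply/eqP; rewrite -dimv_eq0 dimC k0.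
  have := cC ord0; have := cC ord_max; rewrite C0 !memv0 => /eqP h1 /eqP h0.
  have : (ord0 : 'I_l.+1) = ord_max by apply: cinj; rewrite h0 h1.
  move/(congr1 val) => /=; lia.
have yC : y \notin C.
  apply/negP => yC.
  pose m0 := odflt ord0 [pick m | c m == y].
  have hm m : m != m0 -> c m != y.
    move=> mm0; apply/negP => /eqP cy; move: mm0; rewrite /m0.
    case: pickP => [m1 /eqP c1 | /(_ m)]; last by rewrite cy eqxx.
    by rewrite /= -(cinj m m1) ?cy ?c1 // eqxx.
  have : (l * (n - k + 1) <= \sum_(m < l.+1) hw (y - c m))%N.
    rewrite (bigD1 m0) //=.
    apply: leq_trans (leq_addl _ _).
    apply: (@leq_trans (\sum_(m < l.+1 | m != m0) (n - k + 1))).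
      by rewrite sum_nat_cond_const cardsE cardC1 card_ord.
    apply: leq_sum => m mm0; apply: mds; first exact: rpredB yC (cC m).
    by rewrite subr_eq0 eq_sym hm.
  move: csumN; rewrite mulnDr muln1; move: (\sum_(m < l.+1) hw (y - c m))%N => s.
  move: (l * (n - k))%N => t; lia.
have [N' [NB kN bN]] := @ball_count _ _ _ _ dimC mds y kpos kn yC.
set B := [set c0 : 'rV[F]_n | _] in NB.
have hM : (0 < 'C((n + k).+1 %/ 2 - 2, k - 1))%N.
  rewrite lt0n; apply/negP => /eqP h0.
  have h1 : (0 < 'C(n - 1, k - 1))%N by rewrite bin_gt0; lia.
  move: bN h1; rewrite h0 muln0; move: ('C(n - 1, k - 1)) => x; lia.
have LB : (L < #|B|)%N.
  move: hyp; rewrite eqn0Ngt hM /= => hlt.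
  have hmax : Num.max ('C(n - 1, k - 1)%:R / 'C((n + k).+1 %/ 2 - 2, k - 1)%:R) k%:R
      <= N'%:R :> rat.
    by rewrite ge_max ler_nat kN andbT ler_pdivrMr ?ltr0n // -natrM ler_nat.
  have : L%:R < (N' + 1)%:R :> rat.
    by apply: lt_le_trans hlt _; rewrite -addn1 natrD lerD2r.
  rewrite ltr_nat addn1 ltnS => LN; exact: leq_ltn_trans LN NB.
pose A := [set c m | m : 'I_l.+1].
have cA : #|A| = l.+1 by rewrite card_imset // card_ord.
pose D := B :\: A.
have cD : (L - l <= #|D|)%N.
  have h1 := cardsD B A; have h2 := subset_leq_card (subsetIr B A).
  move: h1 h2 cA LB; move: #|D| #|B| #|A| #|B :&: A| => a b d e; lia.
have : (0 < #|[set X : {set 'rV[F]_n} | X \subset D & #|X| == (L - l)%N]|)%N.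
  by rewrite cards_draws bin_gt0.
case/card_gt0P => D'; rewrite inE => /andP[D'D /eqP cD'].
pose H := A :|: D'.
have AD' : A :&: D' = set0.
  apply/setP => x; rewrite !inE; apply/negP => /andP[xA xD'].
  by have := subsetP D'D x xD'; rewrite !inE xA.
have cH : #|H| = L.+1.
  have := cardsUI A D'; rewrite AD' cards0 cA cD' addn0 -/H; lia.
pose s := enum H.
have us : uniq s := enum_uniq (mem H).
have ss : size s = L.+1 by rewrite -cardE.
exists y, (fun i : 'I_L.+1 => nth 0 s i); split.
- move=> i j /eqP; rewrite nth_uniq ?ss // => /eqP; apply: val_inj.
- move=> i; have : nth 0 s i \in H by rewrite -mem_enum mem_nth // ss.
  rewrite in_setU => /orP[/imsetP[m _ ->] | xD']; first exact: cC.
  by have := subsetP D'D _ xD'; rewrite !inE => /andP[_ /andP[]].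
- rewrite mulrC divfK ?pnatr_eq0 // ler_nat.
  have -> : (\sum_(i < L.+1) hw (y - nth (0%R : 'rV[F]_n) s i) = \sum_(x in H) hw (y - x))%N.
    by symmetry; rewrite -big_enum (big_nth (0%R : 'rV[F]_n)) -/s ss big_mkord.
  rewrite (eq_bigl [predU A & D']); last by move=> x; rewrite !inE.
  rewrite bigU; last by rewrite -setI_eq0 AD'.
  rewrite big_imset /=; last by move=> m1 m2 _ _; apply: cinj.
  have h2 : (\sum_(x in D') hw (y - x) <= (L - l) * (n - k))%N.
    rewrite -cD' -sum_nat_const; apply: leq_sum => x xD'.
    have := subsetP D'D _ xD'; rewrite !inE => /andP[_ /andP[_ xk]].
    rewrite (hw_agr dimC); move: xk; move: #|agr y x| => a; lia.
  apply: leq_trans (leq_add csumN h2) _.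
  by rewrite -mulnDl subnKC.
Qed.
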